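(* Let $k$ be a field, let $X$ be a $\mathcal{T}$-space and let $U\in\mathcal{T}$. Then the full additive subcategory of $\mathcal{T}$-flabby objects of $\mathrm{Mod}(k_\mathcal{T})$ is $\Gamma(U;\bullet)$-injective, namely: (i) for every $F\in\mathrm{Mod}(k_\mathcal{T})$ there exist a $\mathcal{T}$-flabby $F'$ and a monomorphism $F\to F'$; (ii) if $0\to F'\to F\to F''\to0$ is exact in $\mathrm{Mod}(k_\mathcal{T})$ and $F'$ is $\mathcal{T}$-flabby, then $0\to\Gamma(U;F')\to\Gamma(U;F)\to\Gamma(U;F'')\to0$ is exact; (iii) if $0\to F'\to F\to F''\to0$ is exact in $\mathrm{Mod}(k_\mathcal{T})$ and $F'$ is $\mathcal{T}$-flabby, then $F$ is $\mathcal{T}$-flabby if and only if $F''$ is $\mathcal{T}$-flabby.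
   Context: Let $X$ be a topological space and $\mathcal{T}$ a family of open subsets of $X$. A $\mathcal{T}$-subset of $X$ is a finite Boolean combination of elements of $\mathcal{T}$; a $\mathcal{T}$-connected subset is a $\mathcal{T}$-subset which is not the disjoint union of two proper $\mathcal{T}$-subsets that are both open and closed in it. $X$ is a $\mathcal{T}$-space if (i) $\mathcal{T}$ is a basis of the topology of $X$ and $\emptyset\in\mathcal{T}$; (ii) $\mathcal{T}$ is closed under finite unions and finite intersections; (iii) every $U\in\mathcal{T}$ has finitely many $\mathcal{T}$-connected components. $X_\mathcal{T}$ is the site whose underlying category is $\mathcal{T}$ (morphisms are inclusions), a family $\{U_i\}\subset\mathcal{T}$ of subsets of $U\in\mathcal{T}$ being a covering of $U$ iff it admits a finite subfamily whose union is $U$. $\mathrm{Mod}(k_\mathcal{T})$ is the category of sheaves of $k$-vector spaces on $X_\mathcal{T}$. $F\in\mathrm{Mod}(k_\mathcal{T})$ is $\mathcal{T}$-flabby if for all $U,V\in\mathcal{T}$ with $U\subseteq V$ the restriction $\Gamma(V;F)\to\Gamma(U;F)$ is surjective. *)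

(* Defs.v *)
From HB Require Import structures.
From mathcomp Require Import all_boot all_order all_algebra.
From mathcomp Require Import boolp classical_sets functions cardinality topology.
Set Implicit Arguments. Unset Strict Implicit. Unset Printing Implicit Defensive.
Import Order.TTheory GRing.Theory.
Local Open Scope classical_set_scope.
Local Open Scope ring_scope.

Section TSpaces.
Variable X : topologicalType.
Variable T : set (set X).

Inductive Tsubset : set X -> Prop :=
  | Tsub_in U : T U -> Tsubset U
  | Tsub_compl A : Tsubset A -> Tsubset (~` A)
  | Tsub_union A B : Tsubset A -> Tsubset B -> Tsubset (A `|` B).

Definition open_in (A B : set X) := exists O : set X, open O /\ B = A `&` O.
Definition closed_in (A B : set X) := exists C : set X, closed C /\ B = A `&` C.

Definition Tconnected (A : set X) : Prop :=
  Tsubset A /\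
  ~ (exists B C : set X,
       [/\ Tsubset B, Tsubset C, B `|` C = A, B `&` C = set0 &
        [/\ B <> A, C <> A, open_in A B /\ closed_in A B &
            open_in A C /\ closed_in A C]]).

Definition Tcomponent (U C : set X) : Prop :=
  [/\ C `<=` U, Tconnected C, C !=set0 &
      forall D, Tconnected D -> C `<=` D -> D `<=` U -> D = C].

Definition Tspace : Prop :=
  [/\ (forall U, T U -> open U)
    , (forall O : set X, open O -> forall x, O x -> exists2 U, T U & U x /\ U `<=` O)
    , T set0
    , (forall U V, T U -> T V -> T (U `|` V) /\ T (U `&` V))
    & (forall U, T U -> finite_set (Tcomponent U))].

Definition Tcovering (U : set X) (I : Type) (Ui : I -> set X) : Prop :=
  (forall i, T (Ui i) /\ Ui i `<=` U) /\
  exists J : set I, finite_set J /\ U = \bigcup_(i in J) Ui i.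

End TSpaces.

Unset Implicit Arguments.
(** Sheaves of k-vector spaces on the site X_T (only the values on elements
    of T are meaningful; values on other sets are irrelevant junk). *)
Record Tsheaf (k : fieldType) (X : topologicalType) (T : set (set X)) := TSheaf {
  sec : set X -> lmodType k;
  res : forall U V : set X, sec V -> sec U;
  res_linear : forall U V, T U -> T V -> U `<=` V ->
    forall (a : k) (x y : sec V), res U V (a *: x + y) = a *: res U V x + res U V y;
  res_id : forall U, T U -> forall x : sec U, res U U x = x;
  res_comp : forall U V W, T U -> T V -> T W -> U `<=` V -> V `<=` W ->
    forall x : sec W, res U V (res V W x) = res U W x;
  sheaf_local : forall U (I : Type) (Ui : I -> set X), T U -> Tcovering T U Ui ->
    forall s : sec U, (forall i, res (Ui i) U s = 0) -> s = 0;
  sheaf_glue : forall U (I : Type) (Ui : I -> set X), T U -> Tcovering T U Ui ->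
    forall t : forall i, sec (Ui i),
      (forall i j, res (Ui i `&` Ui j) (Ui i) (t i) = res (Ui i `&` Ui j) (Ui j) (t j)) ->
      exists s : sec U, forall i, res (Ui i) U s = t i
}.

Arguments Tsheaf k {X} T.
Arguments sec {k X T}.
Arguments res {k X T}.

Record Tmorph (k : fieldType) (X : topologicalType) (T : set (set X))
    (F G : Tsheaf k T) := TMorph {
  mor : forall U : set X, sec F U -> sec G U;
  mor_linear : forall U, T U ->
    forall (a : k) (x y : sec F U), mor U (a *: x + y) = a *: mor U x + mor U y;
  mor_natural : forall U V, T U -> T V -> U `<=` V ->
    forall x : sec F V, mor U (res F U V x) = res G U V (mor V x)
}.

Arguments Tmorph {k X T}.
Arguments mor {k X T F G}.
Set Implicit Arguments.

Section Props.
Variables (k : fieldType) (X : topologicalType) (T : set (set X)).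

Definition Tflabby (F : Tsheaf k T) : Prop :=
  forall U V, T U -> T V -> U `<=` V ->
    forall t : sec F U, exists s : sec F V, res F U V s = t.

Definition Tmono (F G : Tsheaf k T) (f : Tmorph F G) : Prop :=
  forall U, T U -> injective (mor f U).

Definition Tshort_exact (F' F F'' : Tsheaf k T) (f : Tmorph F' F) (g : Tmorph F F'') : Prop :=
  [/\ Tmono f
    , (forall U, T U -> forall x : sec F' U, mor g U (mor f U x) = 0)
    , (forall U, T U -> forall s : sec F U, mor g U s = 0 ->
         exists (I : Type) (Ui : I -> set X), Tcovering T U Ui /\
           forall i, exists t : sec F' (Ui i), mor f (Ui i) t = res F (Ui i) U s)
    & (forall U, T U -> forall s : sec F'' U,
         exists (I : Type) (Ui : I -> set X), Tcovering T U Ui /\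
           forall i, exists t : sec F (Ui i), mor g (Ui i) t = res F'' (Ui i) U s)].

Definition Gamma_short_exact (U : set X) (F' F F'' : Tsheaf k T)
    (f : Tmorph F' F) (g : Tmorph F F'') : Prop :=
  [/\ injective (mor f U)
    , (forall s : sec F U, mor g U s = 0 <-> exists t : sec F' U, mor f U t = s)
    & (forall s'' : sec F'' U, exists s : sec F U, mor g U s = s'')].

End Props.

(* Main.v *)
Require Import Defs.
From HB Require Import structures.
From mathcomp Require Import all_boot all_order all_algebra.
From mathcomp Require Import boolp classical_sets functions cardinality topology.
Set Implicit Arguments. Unset Strict Implicit. Unset Printing Implicit Defensive.
Import Order.TTheory GRing.Theory.
Local Open Scope classical_set_scope.
Local Open Scope ring_scope.

Section DProd.
Variables (k : fieldType) (I : Type) (M : I -> lmodType k).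
Definition dprod := forall i, M i.
HB.instance Definition _ := gen_eqMixin dprod.
HB.instance Definition _ := gen_choiceMixin dprod.
Definition dp0 : dprod := fun i => 0.
Definition dpopp (f : dprod) : dprod := fun i => - f i.
Definition dpadd (f g : dprod) : dprod := fun i => f i + g i.
Definition dpscale (a : k) (f : dprod) : dprod := fun i => a *: f i.
Lemma dpaddA : associative dpadd.
Proof. by move=> f g h; apply: functional_extensionality_dep => i; rewrite /dpadd addrA. Qed.
Lemma dpaddC : commutative dpadd.
Proof. by move=> f g; apply: functional_extensionality_dep => i; rewrite /dpadd addrC. Qed.
Lemma dpadd0 : left_id dp0 dpadd.
Proof. by move=> f; apply: functional_extensionality_dep => i; rewrite /dpadd add0r. Qed.
Lemma dpaddN : left_inverse dp0 dpopp dpadd.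
Proof. by move=> f; apply: functional_extensionality_dep => i; rewrite /dpadd addNr. Qed.
HB.instance Definition _ := GRing.isZmodule.Build dprod dpaddA dpaddC dpadd0 dpaddN.
Lemma dpscaleA a b v : dpscale a (dpscale b v) = dpscale (a * b) v.
Proof. by apply: functional_extensionality_dep => i; rewrite /dpscale scalerA. Qed.
Lemma dpscale1 : left_id 1 dpscale.
Proof. by move=> f; apply: functional_extensionality_dep => i; rewrite /dpscale scale1r. Qed.
Lemma dpscaleDr : right_distributive dpscale +%R.
Proof. by move=> a f g; apply: functional_extensionality_dep => i; rewrite /dpscale /= /dpadd scalerDr. Qed.
Lemma dpscaleDl v : {morph dpscale^~ v: a b / a + b}.
Proof. by move=> a b; apply: functional_extensionality_dep => i; rewrite /dpscale /= /dpadd scalerDl. Qed.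
HB.instance Definition _ := GRing.Zmodule_isLmodule.Build k dprod dpscaleA dpscale1 dpscaleDr dpscaleDl.
Lemma dpE0 i : (0 : dprod) i = 0. Proof. by []. Qed.
Lemma dpED (f g : dprod) i : (f + g) i = f i + g i. Proof. by []. Qed.
Lemma dpEZ a (f : dprod) i : (a *: f) i = a *: f i. Proof. by []. Qed.
End DProd.

Section Quot.
Variables (k : fieldType) (V : lmodType k).
Record subsp := Subsp { ssK : set V; ssK0 : ssK 0;
  ssKD : forall x y, ssK x -> ssK y -> ssK (x + y);
  ssKZ : forall a x, ssK x -> ssK (a *: x) }.
Variable S : subsp.
Let K := ssK S.
Let K0 : K 0 := ssK0 S.
Let KD : forall x y, K x -> K y -> K (x + y) := @ssKD S.
Let KZ : forall a x, K x -> K (a *: x) := @ssKZ S.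
Lemma KN x : K x -> K (- x). Proof. by move=> Kx; rewrite -scaleN1r; apply: KZ. Qed.
Lemma KB x y : K x -> K y -> K (x - y). Proof. by move=> Kx Ky; apply: KD => //; apply: KN. Qed.
Definition quot := {A : set V | exists x, A = [set y | K (y - x)]}.
HB.instance Definition _ := gen_eqMixin quot.
HB.instance Definition _ := gen_choiceMixin quot.
Definition qcls (x : V) : quot := exist _ [set y | K (y - x)] (ex_intro _ x erefl).
Definition qrep (A : quot) : V := projT1 (cid (proj2_sig A)).
Lemma qrepK A : qcls (qrep A) = A.
Proof.
rewrite /qrep; case: (cid _) => x /= hx; case: A hx => A HA /= hx.
subst A; congr exist; exact: Prop_irrelevance.
Qed.
Lemma qcls_eq x y : qcls x = qcls y <-> K (x - y).
Proof.
split.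
  move=> /(congr1 (@proj1_sig _ _)) /= E.
  have : [set z | K (z - x)] x by rewrite /= subrr.
  by rewrite E.
move=> Kxy; apply: eq_exist => /=; apply/seteqP; split => z /= Kz.
  by have := KD Kz Kxy; rewrite addrA subrK.
have := KB Kz Kxy; by rewrite opprB addrA subrK.
Qed.
Lemma qrepE x : K (qrep (qcls x) - x).
Proof. by apply/qcls_eq; rewrite qrepK. Qed.
Definition qadd A B := qcls (qrep A + qrep B).
Definition qopp A := qcls (- qrep A).
Definition qzero := qcls 0.
Definition qscale a A := qcls (a *: qrep A).
Lemma qaddE x y : qadd (qcls x) (qcls y) = qcls (x + y).
Proof.
apply/qcls_eq; have := KD (qrepE x) (qrepE y).
by rewrite opprD !addrA -[_ + _ - x]addrAC -!addrA.
Qed.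
Lemma qoppE x : qopp (qcls x) = qcls (- x).
Proof. by apply/qcls_eq; rewrite opprK addrC -opprB; exact: KN (qrepE x). Qed.
Lemma qscaleE a x : qscale a (qcls x) = qcls (a *: x).
Proof. by apply/qcls_eq; rewrite -scalerBr; apply: KZ; exact: qrepE. Qed.
Lemma qaddA : associative qadd.
Proof. by move=> A B C; rewrite -[A]qrepK -[B]qrepK -[C]qrepK !qaddE addrA. Qed.
Lemma qaddC : commutative qadd.
Proof. by move=> A B; rewrite -[A]qrepK -[B]qrepK !qaddE addrC. Qed.
Lemma qadd0 : left_id qzero qadd.
Proof. by move=> A; rewrite -[A]qrepK /qzero qaddE add0r. Qed.
Lemma qaddN : left_inverse qzero qopp qadd.
Proof. by move=> A; rewrite -[A]qrepK qoppE qaddE addNr. Qed.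
HB.instance Definition _ := GRing.isZmodule.Build quot qaddA qaddC qadd0 qaddN.
Lemma qclsD x y : qcls (x + y) = qcls x + qcls y. Proof. by rewrite -qaddE. Qed.
Lemma qscaleA a b v : qscale a (qscale b v) = qscale (a * b) v.
Proof. by rewrite -[v]qrepK !qscaleE scalerA. Qed.
Lemma qscale1 : left_id 1 qscale.
Proof. by move=> A; rewrite -[A]qrepK qscaleE scale1r. Qed.
Lemma qscaleDr : right_distributive qscale +%R.
Proof. by move=> a A B; rewrite -[A]qrepK -[B]qrepK -qclsD !qscaleE -qclsD scalerDr. Qed.
Lemma qscaleDl v : {morph qscale^~ v: a b / a + b}.
Proof. by move=> a b; rewrite -[v]qrepK !qscaleE -qclsD scalerDl. Qed.
HB.instance Definition _ := GRing.Zmodule_isLmodule.Build k quot qscaleA qscale1 qscaleDr qscaleDl.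
Lemma qclsZ a x : qcls (a *: x) = a *: qcls x. Proof. by rewrite -qscaleE. Qed.
Lemma qcls0 : qcls 0 = 0. Proof. by []. Qed.
Lemma qcls_eq0 x : qcls x = 0 <-> K x.
Proof. by rewrite -qcls0 qcls_eq subr0. Qed.
End Quot.


Lemma finite_cover_ind (Y I : Type) (Ui : I -> set Y) (J : set I) (P : set Y -> Prop) :
  finite_set J -> P set0 -> (forall i A, J i -> P A -> P (Ui i `|` A)) ->
  P (\bigcup_(i in J) Ui i).
Proof.
elim/Pchoice: I => I in Ui J *.
move=> finJ P0 PS.
have [l Jl] : exists l : seq I, J = [set x | x \in l].
  move/finite_fsetP: finJ => [S ->]; exists (finmap.enum_fset S); by [].
rewrite Jl.
have : forall x, x \in l -> J x by rewrite Jl.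
elim: l {Jl} => [|a l IH] Hl.
  by rewrite (_ : \bigcup_(i in _) _ = set0) //; apply/seteqP; split => x //= [].
have -> : \bigcup_(i in [set x | x \in a :: l]) Ui i = Ui a `|` \bigcup_(i in [set x | x \in l]) Ui i.
  apply/seteqP; split => x /=.
    by move=> [i /=]; rewrite inE => /orP[/eqP ->|il] Ux; [left|right; exists i].
  by case=> [Ux|[i /= il Ux]]; [exists a; rewrite //= inE eqxx|exists i; rewrite //= inE il orbT].
apply: PS; first by apply: Hl; rewrite inE eqxx.
by apply: IH => x xl; apply: Hl; rewrite inE xl orbT.
Qed.

Section Basics.
Variables (k : fieldType) (X : topologicalType) (T : set (set X)).
Hypothesis HT : Tspace T.

Lemma T0 : T set0. Proof. by case: HT. Qed.
Lemma TU A B : T A -> T B -> T (A `|` B). Proof. by case: HT => _ _ _ H _ /H h /h []. Qed.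
Lemma TI A B : T A -> T B -> T (A `&` B). Proof. by case: HT => _ _ _ H _ /H h /h []. Qed.

Lemma cover2 A B : T A -> T B -> Tcovering T (A `|` B) (fun b : bool => if b then A else B).
Proof.
move=> TA TB; split; first by case; split => //; by [apply: subsetUl|apply: subsetUr].
exists setT; split; first exact: finite_finset.
apply/seteqP; split=> x.
  by case=> [Ax|Bx]; [exists true|exists false].
by case=> -[] _ /=; [left|right].
Qed.

Lemma cover0 (I : Type) (Ui : I -> set X) (J : set I) U :
  Tcovering T U Ui -> exists J : set I, finite_set J /\ U = \bigcup_(i in J) Ui i.
Proof. by case. Qed.

Variable F : Tsheaf k T.
Section R.
Variables (U V : set X) (hU : T U) (hV : T V) (UV : U `<=` V).
Lemma resD x y : res F U V (x + y) = res F U V x + res F U V y.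
Proof. by have := res_linear _ _ _ F _ _ hU hV UV 1 x y; rewrite !scale1r. Qed.
Lemma res0 : res F U V 0 = 0.
Proof.
have := resD 0 0; rewrite addr0 => /(congr1 (fun z => z - res F U V 0)).
by rewrite subrr addrK.
Qed.
Lemma resZ a x : res F U V (a *: x) = a *: res F U V x.
Proof. by have := res_linear _ _ _ F _ _ hU hV UV a x 0; rewrite !addr0 res0 addr0. Qed.
Lemma resN x : res F U V (- x) = - res F U V x.
Proof. by rewrite -scaleN1r resZ scaleN1r. Qed.
Lemma resB x y : res F U V (x - y) = res F U V x - res F U V y.
Proof. by rewrite resD resN. Qed.
End R.

Lemma sec_set0 (s : sec F set0) : s = 0.
Proof.
apply: (@sheaf_local _ _ _ F set0 void (fun v => match v with end)).
- exact: T0.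
- split; first by case.
  by exists set0; split; [exact: finite_set0|rewrite bigcup_set0].
by case.
Qed.

Lemma slocal2 A B (TA : T A) (TB : T B) (s : sec F (A `|` B)) :
  res F A (A `|` B) s = 0 -> res F B (A `|` B) s = 0 -> s = 0.
Proof.
move=> hA hB; apply: (sheaf_local _ _ _ F _ _ _ (TU TA TB) (cover2 TA TB)).
by case.
Qed.

Lemma sglue2 A B (TA : T A) (TB : T B) (a : sec F A) (b : sec F B) :
  res F (A `&` B) A a = res F (A `&` B) B b ->
  exists s : sec F (A `|` B), res F A (A `|` B) s = a /\ res F B (A `|` B) s = b.
Proof.
move=> hab.
have [|s hs] := @sheaf_glue _ _ _ F (A `|` B) bool (fun b : bool => if b then A else B)
  (TU TA TB) (cover2 TA TB) (fun i => if i as i0 return sec F (if i0 then A else B) then a else b).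
  by case; case => //=; rewrite setIC.
by exists s; split; [exact: (hs true)|exact: (hs false)].
Qed.

Lemma res_eq_loc U V (hU : T U) (hV : T V) (UV : U `<=` V) (x : sec F V) W (hW : T W) (WU : W `<=` U) :
  res F U V x = 0 -> res F W V x = 0.
Proof.
move=> h; rewrite -(res_comp _ _ _ F _ _ _ hW hU hV WU UV) h res0 //.
Qed.
End Basics.

Section Morph.
Variables (k : fieldType) (X : topologicalType) (T : set (set X)).
Variables (F G : Tsheaf k T) (f : Tmorph F G).
Section M.
Variables (U : set X) (hU : T U).
Lemma morD x y : mor f U (x + y) = mor f U x + mor f U y.
Proof. by have := mor_linear _ _ _ _ _ f U hU 1 x y; rewrite !scale1r. Qed.
Lemma mor0 : mor f U 0 = 0.
Proof.
have := morD 0 0; rewrite addr0 => /(congr1 (fun z => z - mor f U 0)).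
by rewrite subrr addrK.
Qed.
Lemma morZ a x : mor f U (a *: x) = a *: mor f U x.
Proof. by have := mor_linear _ _ _ _ _ f U hU a x 0; rewrite !addr0 mor0 addr0. Qed.
Lemma morN x : mor f U (- x) = - mor f U x.
Proof. by rewrite -scaleN1r morZ scaleN1r. Qed.
Lemma morB x y : mor f U (x - y) = mor f U x - mor f U y.
Proof. by rewrite morD morN. Qed.
End M.
End Morph.

Section Exact.
Variables (k : fieldType) (X : topologicalType) (T : set (set X)).
Hypothesis HT : Tspace T.
Variables (F' F F'' : Tsheaf k T) (f : Tmorph F' F) (g : Tmorph F F'').
Hypothesis Hex : Tshort_exact f g.
Hypothesis fl : Tflabby F'.

Lemma f_inj V : T V -> injective (mor f V).
Proof. by case: Hex => + _ _ _; apply. Qed.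
Lemma gf0 V : T V -> forall x, mor g V (mor f V x) = 0.
Proof. by case: Hex => _ + _ _; apply. Qed.

Lemma ex_mid V (hV : T V) (s : sec F V) : mor g V s = 0 -> exists t, mor f V t = s.
Proof.
move=> gs0; case: Hex => _ _ H3 _.
have [I [Ui [cov hloc]]] := H3 V hV s gs0.
have [hUi _] := cov.
pose tt i := projT1 (cid (hloc i)).
have ttE i : mor f (Ui i) (tt i) = res F (Ui i) V s := projT2 (cid (hloc i)).
have TUi i : T (Ui i) := (hUi i).1.
have sUi i : Ui i `<=` V := (hUi i).2.
have [|t ht] := sheaf_glue _ _ _ F' V I Ui hV cov tt.
  move=> i j; have TIij := TI HT (TUi i) (TUi j).
  apply: (f_inj TIij).
  rewrite (mor_natural _ _ _ _ _ f _ _ TIij (TUi i) (@subIsetl _ _ _)).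
  rewrite (mor_natural _ _ _ _ _ f _ _ TIij (TUi j) (@subIsetr _ _ _)).
  rewrite !ttE (res_comp _ _ _ F _ _ _ TIij (TUi i) hV (@subIsetl _ _ _) (sUi i)).
  by rewrite (res_comp _ _ _ F _ _ _ TIij (TUi j) hV (@subIsetr _ _ _) (sUi j)).
exists t; apply/eqP; rewrite -subr_eq0; apply/eqP.
apply: (sheaf_local _ _ _ F V I Ui hV cov) => i.
rewrite (resB (TUi i) hV (sUi i)) -(mor_natural _ _ _ _ _ f _ _ (TUi i) hV (sUi i)).
by rewrite ht ttE subrr.
Qed.

Lemma ex_surj V (hV : T V) (s'' : sec F'' V) : exists s, mor g V s = s''.
Proof.
case: Hex => _ _ _ H4.
have [I [Ui [[hUi [J [finJ VJ]]] hloc]]] := H4 V hV s''.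
pose P := fun A : set X => T A /\ A `<=` V /\
  exists s : sec F A, mor g A s = res F'' A V s''.
have : P (\bigcup_(i in J) Ui i).
  apply: finite_cover_ind => //.
    split; first exact: T0 HT.
    split; first by [].
    exists 0; rewrite mor0; last exact: T0 HT.
    by rewrite [RHS]sec_set0.
  move=> i A Ji [TA [AV [b hb]]].
  have [TW WV] := hUi i.
  have [a ha] := hloc i.
  set W := Ui i in TW WV a ha *.
  have TWA := TI HT TW TA.
  have WAW : W `&` A `<=` W by apply: subIsetl.
  have WAA : W `&` A `<=` A by apply: subIsetr.
  pose d := res F (W `&` A) W a - res F (W `&` A) A b.
  have gd : mor g _ d = 0.
    rewrite /d (morB g TWA) (mor_natural _ _ _ _ _ g _ _ TWA TW WAW).
    rewrite (mor_natural _ _ _ _ _ g _ _ TWA TA WAA) ha hb.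
    rewrite (res_comp _ _ _ F'' _ _ _ TWA TW hV WAW WV).
    by rewrite (res_comp _ _ _ F'' _ _ _ TWA TA hV WAA AV) subrr.
  have [t ht] := ex_mid TWA gd.
  have [t' ht'] := fl TWA TA WAA t.
  pose b' := b + mor f A t'.
  have hb' : res F (W `&` A) W a = res F (W `&` A) A b'.
    rewrite /b' (resD TWA TA WAA) -(mor_natural _ _ _ _ _ f _ _ TWA TA WAA) ht' ht /d.
    by rewrite addrC subrK.
  have [s [hsa hsb]] := sglue2 HT TW TA hb'.
  have TWA' := TU HT TW TA.
  split; first exact: TWA'.
  split; first by move=> x [Wx|Ax]; [exact: WV|exact: AV].
  exists s; apply/eqP; rewrite -subr_eq0; apply/eqP.
  apply: (slocal2 (F:=F'') HT TW TA).
    rewrite (resB TW TWA' (@subsetUl _ _ _)) -(mor_natural _ _ _ _ _ g _ _ TW TWA' (@subsetUl _ _ _)).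
    by rewrite hsa ha (res_comp _ _ _ F'' _ _ _ TW TWA' hV (@subsetUl _ _ _) _) ?subrr // => x [Wx|Ax]; [exact: WV|exact: AV].
  rewrite (resB TA TWA' (@subsetUr _ _ _)) -(mor_natural _ _ _ _ _ g _ _ TA TWA' (@subsetUr _ _ _)).
  rewrite hsb /b' (morD g TA) gf0 // addr0 hb.
  by rewrite (res_comp _ _ _ F'' _ _ _ TA TWA' hV (@subsetUr _ _ _) _) ?subrr // => x [Wx|Ax]; [exact: WV|exact: AV].
rewrite -VJ => -[_ [_ [s hs]]]; exists s.
by rewrite hs (res_id _ _ _ F'' V hV).
Qed.


Lemma part2 U (hU : T U) : Gamma_short_exact U f g.
Proof.
split; first exact: f_inj.
  move=> s; split; first exact: ex_mid.
  by case=> t <-; apply: gf0.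
exact: ex_surj.
Qed.

Lemma part3 : Tflabby F <-> Tflabby F''.
Proof.
split.
  move=> flF U V hU hV UV t''.
  have [t ht] := ex_surj hU t''.
  have [s hs] := flF U V hU hV UV t.
  by exists (mor g V s); rewrite -(mor_natural _ _ _ _ _ g _ _ hU hV UV) hs ht.
move=> fl'' U V hU hV UV t.
have [s'' hs''] := fl'' U V hU hV UV (mor g U t).
have [s hs] := ex_surj hV s''.
pose d := res F U V s - t.
have gd : mor g U d = 0.
  by rewrite /d (morB g hU) (mor_natural _ _ _ _ _ g _ _ hU hV UV) hs hs'' subrr.
have [u hu] := ex_mid hU gd.
have [u' hu'] := fl hU hV UV u.
exists (s - mor f V u').
rewrite (resB hU hV UV) -(mor_natural _ _ _ _ _ f _ _ hU hV UV) hu' hu /d.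
by rewrite opprB addrC subrK.
Qed.
End Exact.

Section Points.
Variables (k : fieldType) (X : topologicalType) (T : set (set X)).
Hypothesis HT : Tspace T.

Definition IsPoint (p : set (set X)) : Prop :=
  [/\ p `<=` T, (exists W, p W), (forall A B, p A -> p B -> p (A `&` B)),
      (forall A B, p A -> T B -> A `<=` B -> p B) &
      (forall (I : Type) (Ui : I -> set X) W, p W -> Tcovering T W Ui -> exists i, p (Ui i))].

Variable F : Tsheaf k T.

Lemma slocal2' Z A B (TZ : T Z) (TA : T A) (TB : T B) (EZ : Z = A `|` B) (s : sec F Z) :
  res F A Z s = 0 -> res F B Z s = 0 -> s = 0.
Proof. by subst Z; apply: slocal2. Qed.

Section Z.
Variables (V : set X) (hV : T V) (z : sec F V) (nz : z <> 0).

Definition Good (p : set (set X)) :=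
  [/\ p `<=` T, p V, (forall A B, p A -> p B -> p (A `&` B)),
      (forall A B, p A -> T B -> A `<=` B -> p B) &
      (forall W, p W -> res F (W `&` V) V z <> 0)].

Lemma germ_set0 : res F (set0 `&` V) V z = 0.
Proof. by rewrite set0I; apply: sec_set0. Qed.

Lemma exists_point : exists p, IsPoint p /\ p V /\ forall W, p W -> res F (W `&` V) V z <> 0.
Proof.
pose P := fun p : set (set X) => p = set0 \/ Good p.
have [A0 [PA0 maxA0]] : exists A, P A /\ forall B, A `<` B -> ~ P B.
  apply: Zorn_bigcup => Fc FcP tot.
  have goodm m : Fc m -> forall A, m A -> Good m.
    move=> Fm A mA; case: (FcP m Fm) => // m0; by rewrite m0 in mA.
  case: (pselect (exists m, Fc m /\ exists A, m A)); last first.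
    move=> nm; left; apply/seteqP; split => // A [m Fm mA].
    by apply: nm; exists m; split => //; exists A.
  move=> [m0 [Fm0 [A0 m0A0]]]; right.
  have [G0 G1 G2 G3 G4] := goodm _ Fm0 _ m0A0.
  split.
  - by move=> A [m Fm mA]; have [] := goodm _ Fm _ mA; move=> + _ _ _ _; apply.
  - by exists m0.
  - move=> A B [m1 Fm1 m1A] [m2 Fm2 m2B].
    case: (tot _ _ Fm1 Fm2) => sub.
      have [_ _ H _ _] := goodm _ Fm2 _ m2B; exists m2 => //; apply: H => //; exact: sub.
    have [_ _ H _ _] := goodm _ Fm1 _ m1A; exists m1 => //; apply: H => //; exact: sub.
  - move=> A B [m Fm mA] TB AB; have [_ _ _ H _] := goodm _ Fm _ mA.
    by exists m => //; apply: H mA TB AB.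
  - by move=> W [m Fm mW]; have [_ _ _ _ H] := goodm _ Fm _ mW; apply: H.
have gA0 : Good A0.
  case: PA0 => // A0e; exfalso.
  pose B := fun W => T W /\ V `<=` W.
  have AB : A0 `<` B.
    by rewrite A0e; split => // hB; apply: (hB V); split.
  apply: (maxA0 B AB); right; split.
  - by move=> W [].
  - by split.
  - by move=> A1 B1 [TA VA] [TB VB]; split; [exact: (TI HT)|move=> x Vx; split; [exact: VA|exact: VB]].
  - by move=> A1 B1 [TA VA] TB AB1; split => //; move=> x Vx; apply: AB1; apply: VA.
  - by move=> W [TW VW]; rewrite setIidr // (res_id _ _ _ F V hV).
have [G0 G1 G2 G3 G4] := gA0.
have prime2 C D : T C -> T D -> A0 (C `|` D) -> A0 C \/ A0 D.
  move=> TC TD ACD.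
  case: (pselect (A0 C)) => hC; first by left.
  case: (pselect (A0 D)) => hD; first by right.
  exfalso.
  have bad (E : set X) : T E -> ~ A0 E ->
      exists P1, A0 P1 /\ res F ((P1 `&` E) `&` V) V z = 0.
    move=> TE nE.
    pose B := fun W => T W /\ exists P1, A0 P1 /\ P1 `&` E `<=` W.
    have AB : A0 `<` B.
      split; first by move=> W AW; split; [exact: G0|exists W; split=> //; apply: subIsetl].
      move=> hB; apply: nE; apply: hB; split => //; exists V; split => //; apply: subIsetr.
    have nGB : ~ Good B by move=> gB; apply: (maxA0 B AB); right.
    apply: contrapT => nex; apply: nGB; split.
    - by move=> W [].
    - by split => //; exists V; split => //; move=> x [] //.
    - move=> A1 B1 [TA [P1 [AP1 s1]]] [TB [P2 [AP2 s2]]]; split; first exact: (TI HT).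
      exists (P1 `&` P2); split; first exact: G2.
      by move=> x [[p1 p2] e]; split; [apply: s1|apply: s2].
    - move=> A1 B1 [TA [P1 [AP1 s1]]] TB AB1; split => //; exists P1; split => //.
      by move=> x h; apply: AB1; apply: s1.
    - move=> W [TW [P1 [AP1 s1]]] hW; apply: nex; exists P1; split => //.
      have TP1 := G0 _ AP1.
      have TWV : T (W `&` V) by exact: (TI HT).
      apply: (res_eq_loc TWV hV (@subIsetr _ W V) (W := (P1 `&` E) `&` V)) => //.
      + by apply: (TI HT) => //; apply: (TI HT).
      + by move=> x [hx Vx]; split => //; apply: s1.
  have [P1 [AP1 h1]] := bad C TC hC.
  have [P2 [AP2 h2]] := bad D TD hD.
  pose Q := (P1 `&` P2) `&` (C `|` D).
  have AQ : A0 Q by apply: (G2) => //; apply: (G2).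
  apply: (G4 _ AQ).
  have TP1 := G0 _ AP1; have TP2 := G0 _ AP2.
  have TQ : T Q by apply: (TI HT); [exact: (TI HT)|exact: (TU HT)].
  have TQV : T (Q `&` V) by exact: (TI HT).
  have TE1 : T ((Q `&` C) `&` V) by apply: (TI HT) => //; exact: (TI HT).
  have TE2 : T ((Q `&` D) `&` V) by apply: (TI HT) => //; exact: (TI HT).
  have sQV : Q `&` V `<=` V by apply: subIsetr.
  apply: (@slocal2' _ ((Q `&` C) `&` V) ((Q `&` D) `&` V) TQV TE1 TE2).
  - apply/seteqP; split.
      move=> x [[Px CD] Vx]; case: (CD) => [Cx|Dx]; [left|right]; split => //; split => //; split => //.
    by move=> x [[[pq Cx] Vx]|[[pq Dx] Vx]]; split.
  - have s1 : (Q `&` C) `&` V `<=` Q `&` V by move=> x [[? ?] ?]; split.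
    rewrite (res_comp _ _ _ F _ _ _ TE1 TQV hV s1 sQV).
    have TPV : T ((P1 `&` C) `&` V) by apply: (TI HT) => //; exact: (TI HT).
    apply: (res_eq_loc TPV hV (@subIsetr _ _ V)) => //.
    by move=> x [[[[p1 p2] _] Cx] Vx]; split => //; split.
  - have s1 : (Q `&` D) `&` V `<=` Q `&` V by move=> x [[? ?] ?]; split.
    rewrite (res_comp _ _ _ F _ _ _ TE2 TQV hV s1 sQV).
    have TPV : T ((P2 `&` D) `&` V) by apply: (TI HT) => //; exact: (TI HT).
    apply: (res_eq_loc TPV hV (@subIsetr _ _ V)) => //.
    by move=> x [[[[p1 p2] _] Dx] Vx]; split => //; split.
exists A0; split; last by split.
split => //; first by exists V.
move=> I Ui W AW [hUi [J [finJ WJ]]].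
have : T (\bigcup_(i in J) Ui i) /\ (A0 (\bigcup_(i in J) Ui i) -> exists i, A0 (Ui i)).
  apply: (finite_cover_ind (P := fun A => T A /\ (A0 A -> exists i, A0 (Ui i)))) => //.
    split; first exact: T0 HT.
    by move=> A00; have := G4 _ A00; rewrite germ_set0.
  move=> i B Ji [TB IH]; have TUi := (hUi i).1.
  split; first exact: (TU HT).
  by move=> /(prime2 _ _ TUi TB) [h|/IH//]; exists i.
by rewrite -WJ => -[_]; apply.
Qed.
End Z.
End Points.

Section God.
Variables (k : fieldType) (X : topologicalType) (T : set (set X)).
Hypothesis HT : Tspace T.
Variable F : Tsheaf k T.

Definition Pt := {p : set (set X) | IsPoint T p}.
Definition D : lmodType k := dprod (sec F).

Definition stK (p : Pt) : set D :=
  fun f => exists W0, proj1_sig p W0 /\ forall W, T W -> W `<=` W0 -> f W = 0.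

Lemma stK0 p : stK p 0.
Proof. by have [_ [W pW] _ _ _] := proj2_sig p; exists W; split. Qed.
Lemma stKD p x y : stK p x -> stK p y -> stK p (x + y).
Proof.
have [_ _ pI _ _] := proj2_sig p; move=> [W1 [p1 h1]] [W2 [p2 h2]]; exists (W1 `&` W2); split; first exact: pI.
move=> W TW sW; rewrite dpED h1 ?h2 ?addr0 //; by move=> x0 /sW [].
Qed.
Lemma stKZ p a x : stK p x -> stK p (a *: x).
Proof. by move=> [W [pW h]]; exists W; split => // W' TW sW; rewrite dpEZ h // scaler0. Qed.

Definition stS (p : Pt) : subsp D := Subsp (@stK0 p) (@stKD p) (@stKZ p).
Definition G (p : Pt) : lmodType k := quot (stS p).

Definition Fsec (V : set X) : lmodType k :=
  dprod (fun q : {q : Pt | proj1_sig q V} => G (proj1_sig q)).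

Definition Fres (U V : set X) (x : Fsec V) : Fsec U :=
  fun q => match pselect (proj1_sig (proj1_sig q) V) with
           | left h => x (exist _ (proj1_sig q) h)
           | right _ => 0 end.
Arguments Fres : clear implicits.

Lemma FresE U V (x : Fsec V) (q : {q : Pt | proj1_sig q U}) (h : proj1_sig (proj1_sig q) V) :
  Fres U V x q = x (exist _ (proj1_sig q) h).
Proof. by rewrite /Fres; case: pselect => [h'|//]; rewrite (Prop_irrelevance h' h). Qed.
Arguments FresE {U V x q} h.

Lemma pt_up (q : Pt) U V : proj1_sig q U -> T V -> U `<=` V -> proj1_sig q V.
Proof. by have [_ _ _ pU _] := proj2_sig q; apply: pU. Qed.
Lemma pt_I (q : Pt) U V : proj1_sig q U -> proj1_sig q V -> proj1_sig q (U `&` V).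
Proof. by have [_ _ pI _ _] := proj2_sig q; apply: pI. Qed.
Lemma pt_cov (q : Pt) (I : Type) (Ui : I -> set X) W :
  proj1_sig q W -> Tcovering T W Ui -> exists i, proj1_sig q (Ui i).
Proof. by have [_ _ _ _ pc] := proj2_sig q; apply: pc. Qed.

Lemma Fres_linear U V : T U -> T V -> U `<=` V ->
  forall (a : k) (x y : Fsec V), Fres U V (a *: x + y) = a *: Fres U V x + Fres U V y.
Proof.
move=> hU hV UV a x y; apply: functional_extensionality_dep => q.
have hq := pt_up (proj2_sig q) hV UV.
by rewrite dpED dpEZ !(FresE hq).
Qed.

Lemma Fres_id U : T U -> forall x : Fsec U, Fres U U x = x.
Proof.
move=> hU x; apply: functional_extensionality_dep => q.
by rewrite (FresE (proj2_sig q)); case: q.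
Qed.

Lemma Fres_comp U V W : T U -> T V -> T W -> U `<=` V -> V `<=` W ->
  forall x : Fsec W, Fres U V (Fres V W x) = Fres U W x.
Proof.
move=> hU hV hW UV VW x; apply: functional_extensionality_dep => q.
have hqV := pt_up (proj2_sig q) hV UV.
have hqW := pt_up hqV hW VW.
by rewrite (FresE hqV) (FresE hqW) (FresE (q := exist _ (proj1_sig q) hqV) hqW).
Qed.

Lemma Fsheaf_local U (I : Type) (Ui : I -> set X) : T U -> Tcovering T U Ui ->
  forall s : Fsec U, (forall i, Fres (Ui i) U s = 0) -> s = 0.
Proof.
move=> hU cov s hs; apply: functional_extensionality_dep => q.
have [i hi] := pt_cov (proj2_sig q) cov.
have := congr1 (fun f : Fsec (Ui i) => f (exist _ (proj1_sig q) hi)) (hs i).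
by rewrite (FresE (q := exist _ (proj1_sig q) hi) (proj2_sig q)); case: q hi => q hq hi /= ->.
Qed.

Lemma Fsheaf_glue U (I : Type) (Ui : I -> set X) : T U -> Tcovering T U Ui ->
  forall t : forall i, Fsec (Ui i),
    (forall i j, Fres (Ui i `&` Ui j) (Ui i) (t i) = Fres (Ui i `&` Ui j) (Ui j) (t j)) ->
    exists s : Fsec U, forall i, Fres (Ui i) U s = t i.
Proof.
move=> hU cov t ht.
have [hUi _] := cov.
pose ch (q : {q : Pt | proj1_sig q U}) : {i : I | proj1_sig (proj1_sig q) (Ui i)} := cid (pt_cov (proj2_sig q) cov).
exists (fun q => t (projT1 (ch q)) (exist _ (proj1_sig q) (projT2 (ch q)))) => j.
apply: functional_extensionality_dep => q.
have hqU := pt_up (proj2_sig q) hU (hUi j).2.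
rewrite (FresE hqU) /=.
case: (ch _) => i hi /=.
have hij := pt_I hi (proj2_sig q).
have := congr1 (fun f : Fsec (Ui i `&` Ui j) => f (exist _ (proj1_sig q) hij)) (ht i j).
rewrite (FresE (q := exist _ (proj1_sig q) hij) hi) (FresE (q := exist _ (proj1_sig q) hij) (proj2_sig q)) => E.
move: hqU hij hi E; case: q => q0 hq0 /= _ hij hi E.
apply: etrans E; congr (t i (exist _ _ _)); exact: Prop_irrelevance.
Qed.

Definition Fg : Tsheaf k T :=
  @TSheaf k X T Fsec Fres Fres_linear Fres_id Fres_comp Fsheaf_local Fsheaf_glue.


Lemma Fg_flabby : Tflabby Fg.
Proof.
move=> U V hU hV UV t; exists (Fres V U t); rewrite /=.
apply: functional_extensionality_dep => q.
have hq := pt_up (proj2_sig q) hV UV.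
rewrite (FresE hq) (FresE (q := exist _ (proj1_sig q) hq) (proj2_sig q)).
by case: q hq.
Qed.

Definition phi V (s : sec F V) : D :=
  fun W => match pselect (T W /\ W `<=` V) with
           | left _ => res F W V s
           | right _ => 0 end.
Arguments phi : clear implicits.

Lemma phi_linear V (hV : T V) a (x y : sec F V) :
  phi V (a *: x + y) = a *: phi V x + phi V y.
Proof.
apply: functional_extensionality_dep => W; rewrite dpED dpEZ /phi.
case: pselect => [[TW WV]|_]; first exact: res_linear.
by rewrite scaler0 addr0.
Qed.

Definition gmor V (s : sec F V) : Fsec V :=
  fun q => qcls (stS (proj1_sig q)) (phi V s).
Arguments gmor : clear implicits.

Lemma gmor_linear V : T V -> forall a (x y : sec F V),
  gmor V (a *: x + y) = a *: gmor V x + gmor V y.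
Proof.
move=> hV a x y; apply: functional_extensionality_dep => q.
by rewrite dpED dpEZ /gmor phi_linear // qclsD qclsZ.
Qed.

Lemma gmor_natural U V : T U -> T V -> U `<=` V ->
  forall x : sec F V, gmor U (res F U V x) = Fres U V (gmor V x).
Proof.
move=> hU hV UV x; apply: functional_extensionality_dep => q.
have hq := pt_up (proj2_sig q) hV UV.
rewrite (FresE hq) /gmor /=; apply/qcls_eq.
exists U; split; first exact: (proj2_sig q).
move=> W TW WU.
change (phi U (res F U V x) W - phi V x W = 0).
rewrite /phi; case: pselect => [_|[]]; last by split.
case: pselect => [_|[]]; last by split => // w /WU /UV.
by rewrite (res_comp _ _ _ F _ _ _ TW hU hV WU UV) subrr.
Qed.

Definition gmorph : Tmorph F Fg := @TMorph k X T F Fg gmor gmor_linear gmor_natural.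

Lemma gmono : Tmono gmorph.
Proof.
move=> V hV x y /= exy.
apply/eqP; rewrite -subr_eq0; apply/eqP; apply: contrapT => nz.
have hz : mor gmorph V (x - y) = 0 by rewrite (morB gmorph hV) /= exy subrr.
have [p [Ip [pV germ]]] := exists_point HT hV nz.
pose q : {q : Pt | proj1_sig q V} := exist _ (exist _ p Ip) pV.
have := congr1 (fun f : Fsec V => f q) hz.
rewrite /= /gmor => /qcls_eq0 [W0 [pW0 h0]].
have [pT _ _ _ _] := Ip.
have TW0V : T (W0 `&` V) by apply: (TI HT) => //; exact: pT.
have := h0 _ TW0V (@subIsetl _ _ _).
rewrite /phi; case: pselect => [_|[]]; last by split => //; apply: subIsetr.
exact: germ.
Qed.
End God.

Unset Implicit Arguments.
Theorem mainTheorem16 (k : fieldType) (X : topologicalType) (T : set (set X))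
    (HT : Tspace T) (U : set X) (HU : T U) :
  (forall F : Tsheaf k T,
     exists (F' : Tsheaf k T) (f : Tmorph F F'), Tflabby F' /\ Tmono f) /\
  (forall (F' F F'' : Tsheaf k T) (f : Tmorph F' F) (g : Tmorph F F''),
     Tshort_exact f g -> Tflabby F' -> Gamma_short_exact U f g) /\
  (forall (F' F F'' : Tsheaf k T) (f : Tmorph F' F) (g : Tmorph F F''),
     Tshort_exact f g -> Tflabby F' -> (Tflabby F <-> Tflabby F'')).
Proof.
split.
  move=> F; exists (Fg F), (gmorph F); split; [exact: Fg_flabby|exact: gmono].
split.
  by move=> F' F F'' f g Hex fl; apply: part2.
by move=> F' F F'' f g Hex fl; exact: (part3 HT Hex fl).
Qed.
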